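(* Let $p>5$ be a prime, $q=p^h$, and let $\mathcal{F}$ be the projective closure of $ax^n+by^m=1$ over $\mathbb{F}_q$, with $a,b\in\mathbb{F}_q^*$ and $m,n$ positive integers, $n\ge m>2$, $p\nmid mn$. Assume $\mathcal{F}$ is classical with respect to lines and nonclassical with respect to conics. For $P=(u:v:1)\in\mathcal{F}$ with $uv\ne0$, the osculating conic $\mathcal{H}_P$ to $\mathcal{F}$ at $P$ is the irreducible conic $H_P(X,Y,Z)=0$, where $H_P=au^{n-2}X^2+bv^{m-2}Y^2-Z^2$ if $p\mid(m-2)$ and $p\mid(n-2)$; $H_P=au^{n+1}YZ+bv^{m+1}XZ-XY$ if $p\mid(m+1)$ and $p\mid(n+1)$; $H_P=a^4u^{4n-2}X^2+b^4v^{4m-2}Y^2+Z^2-2a^2b^2u^{2n-1}v^{2m-1}XY-2a^2u^{2n-1}XZ-2b^2v^{2m-1}YZ$ if $p\mid(2m-1)$ and $p\mid(2n-1)$; $H_P=b^2v^{2m-1}YZ-a^2u^{2n-2}X^2+2au^{n-1}XZ-Z^2$ if $p\mid(2m-1)$ and $p\mid(n-1)$; $H_P=au^{n-1}XY+bv^{m+1}Z^2-YZ$ if $p\mid(m+1)$ and $p\mid(n-1)$; $H_P=au^{n-1}XZ+bv^{m-2}Y^2-Z^2$ if $p\mid(m-2)$ and $p\mid(n-1)$; $H_P=au^{n-2}X^2+bv^{m-1}YZ-Z^2$ if $p\mid(m-1)$ and $p\mid(n-2)$; $H_P=a^2u^{2n-1}XZ-b^2v^{2m-2}Y^2+2bv^{m-1}YZ-Z^2$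 if $p\mid(m-1)$ and $p\mid(2n-1)$; $H_P=bv^{m-1}XY+au^{n+1}Z^2-XZ$ if $p\mid(m-1)$ and $p\mid(n+1)$.
   Context: For a point $P$ of a plane curve $\mathcal{F}$, the osculating conic at $P$ is the unique conic $\mathcal{C}$ maximizing the intersection multiplicity $I(P,\mathcal{F}\cap\mathcal{C})$. Classicality w.r.t. lines/conics: with $\varphi_j$ the monomials of degree $s\in\{1,2\}$ in $x,y,1$, $\tau$ separating and $D^{(k)}_\tau$ Hasse derivatives, the order sequence is the lexicographically smallest $\varepsilon_0<\dots<\varepsilon_M$ ($M=\binom{s+2}{2}-1$) with $\det(D^{(\varepsilon_i)}_\tau\varphi_j)\ne0$, and the curve is classical if $\varepsilon_i=i$ for all $i$, nonclassical otherwise. *)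

(* Defs.v *)
From HB Require Import structures.
From mathcomp Require Import all_boot all_order all_algebra.
Set Implicit Arguments. Unset Strict Implicit. Unset Printing Implicit Defensive.
Import Order.TTheory GRing.Theory Num.Theory.
Local Open Scope ring_scope.

(* Plane conics: c_XX X^2 + c_YY Y^2 + c_ZZ Z^2 + c_XY XY + c_XZ XZ + c_YZ YZ *)
Record conic (L : fieldType) := mkConic {
  cXX : L; cYY : L; cZZ : L; cXY : L; cXZ : L; cYZ : L }.

Definition conic_nonzero (L : fieldType) (C : conic L) : Prop :=
  ~ (cXX C = 0 /\ cYY C = 0 /\ cZZ C = 0 /\ cXY C = 0 /\ cXZ C = 0 /\ cYZ C = 0).

Definition conic_prop (L : fieldType) (C D : conic L) : Prop :=
  exists c : L, c != 0 /\
    (cXX C = c * cXX D /\ cYY C = c * cYY D /\ cZZ C = c * cZZ D /\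
     cXY C = c * cXY D /\ cXZ C = c * cXZ D /\ cYZ C = c * cYZ D).

Definition conic_irreducible (L : fieldType) (C : conic L) : Prop :=
  forall l1 l2 l3 k1 k2 k3 : L,
    ~ (cXX C = l1 * k1 /\ cYY C = l2 * k2 /\ cZZ C = l3 * k3 /\
       cXY C = l1 * k2 + l2 * k1 /\ cXZ C = l1 * k3 + l3 * k1 /\
       cYZ C = l2 * k3 + l3 * k2).

Definition conic_evalp (L : fieldType) (C : conic L) (X Y Z : {poly L}) : {poly L} :=
  cXX C *: (X * X) + cYY C *: (Y * Y) + cZZ C *: (Z * Z)
  + cXY C *: (X * Y) + cXZ C *: (X * Z) + cYZ C *: (Y * Z).

(* Intersection multiplicity at P = (u : v : 1) of the curve            *)
(*   A x^n + B y^m = 1  with a conic C, at a point with u v != 0.       *)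
(* P is a nonsingular point (dF/dy = m B v^(m-1) != 0), with local      *)
(* parameter t = x - u; y = Y(t) is the branch with Y(0) = v.           *)
(* I(P, F /\ C) >= k  iff  C(u + t, Y(t), 1) = 0 mod t^k, where Y is    *)
(* the branch expansion truncated mod t^k (it is unique mod t^k).       *)
Definition imult_ge (L : fieldType) (A B : L) (n m : nat) (u v : L)
    (C : conic L) (k : nat) : Prop :=
  exists Y : {poly L},
    [/\ Y.[0] = v,
        'X^k %| A *: ('X + u%:P) ^+ n + B *: Y ^+ m - 1
      & 'X^k %| conic_evalp C ('X + u%:P) Y 1].

Definition imult_eq (L : fieldType) (A B : L) (n m : nat) (u v : L)
    (C : conic L) (k : nat) : Prop :=
  imult_ge A B n m u v C k /\ ~ imult_ge A B n m u v C k.+1.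

Definition osculating_conic (L : fieldType) (A B : L) (n m : nat) (u v : L)
    (H : conic L) : Prop :=
  conic_nonzero H /\
  exists k : nat, imult_eq A B n m u v H k /\
    forall C : conic L, conic_nonzero C -> ~ conic_prop C H ->
      ~ imult_ge A B n m u v C k.

(* Classicality with respect to curves of degree s (s = 1 lines,        *)
(* s = 2 conics).                                                       *)
Definition monos (s : nat) : seq (nat * nat) :=
  [seq (i, j) | i <- iota 0 s.+1, j <- iota 0 (s - i).+1].

(* Hasse derivatives w.r.t. the separating variable x at a generic point
   (xi, eta) of the curve: D^(i)_x phi = i-th coefficient of the Taylor
   expansion phi(xi + t, Y(t)), Y(t) = Taylor expansion of y.
   wronsk = ( D^(i)_x phi_j )_{0 <= i, j <= M}. *)
Definition wronsk (M : fieldType) (xi : M) (Y : {poly M}) (s : nat)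
    : 'M[M]_(size (monos s)) :=
  \matrix_(i, j) ((('X + xi%:P) ^+ (nth (0, 0) (monos s) j).1
                   * Y ^+ (nth (0, 0) (monos s) j).2)`_i).

(* The curve a x^n + b y^m = 1 over K is classical w.r.t. degree-s curves
   iff its order sequence is 0,1,...,M, i.e. (since 0 < 1 < ... < M is the
   lexicographically smallest candidate) iff det(D^(i)_x phi_j)_{i,j<=M} != 0
   in the function field.  The function field is realised by a generic
   point (xi, eta) in an extension field M of K (xi transcendental over K);
   Y is the Taylor expansion of y at the generic point, truncated at
   order M+1. *)
Definition classical_wrt (K : fieldType) (a b : K) (n m s : nat) : Prop :=
  forall (M : fieldType) (iota : {rmorphism K -> M}) (xi eta : M) (Y : {poly M}),
    (forall q : {poly K}, q != 0 -> (map_poly iota q).[xi] != 0) ->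
    iota a * xi ^+ n + iota b * eta ^+ m = 1 ->
    Y.[0] = eta ->
    'X^(size (monos s)) %| iota a *: ('X + xi%:P) ^+ n + iota b *: Y ^+ m - 1 ->
    \det (wronsk xi Y s) != 0.

Definition osc_irr (L : fieldType) (A B : L) (n m : nat) (u v : L) (H : conic L) :=
  osculating_conic A B n m u v H /\ conic_irreducible H.

(* Main.v *)
Require Import Defs.
From HB Require Import structures.
From mathcomp Require Import all_boot all_order all_algebra.
From mathcomp Require Import all_field.
From mathcomp Require Import ring zify.
From Stdlib Require Import Classical.
Set Implicit Arguments. Unset Strict Implicit. Unset Printing Implicit Defensive.
Import Order.TTheory GRing.Theory Num.Theory.
Local Open Scope ring_scope.

Section Gen.
Variable L : fieldType.
Implicit Types P Q R : {poly L}.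

Lemma dvdXn_coef k P : 'X^k %| P -> forall i, (i < k)%N -> P`_i = 0.
Proof. by move=> /dvdpP [q ->] i ik; rewrite coefMXn ik. Qed.

Lemma coef_dvdXn k P : (forall i, (i < k)%N -> P`_i = 0) -> 'X^k %| P.
Proof.
move=> H; rewrite -(poly_take_drop k P).
have -> : take_poly k P = 0.
  by apply/polyP=> i; rewrite coef_take_poly coef0; case: ifP => // /H.
by rewrite add0r dvdp_mull.
Qed.

Lemma dvdXn_small k P : 'X^k %| P -> (size P <= k)%N -> P = 0.
Proof.
move=> H s; apply/eqP; apply/negPn/negP => nz.
have := dvdp_leq nz H; rewrite size_polyXn => h.
by have := leq_trans h s; rewrite ltnn.
Qed.

Lemma dvdXn_le j k P : (j <= k)%N -> 'X^k %| P -> 'X^j %| P.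
Proof. by move=> jk; apply: dvdp_trans; rewrite dvdp_exp2l. Qed.

Lemma poly_split0 P : P = (P`_0)%:P + drop_poly 1 P * 'X.
Proof.
rewrite -{1}(poly_take_drop 1 P) expr1; congr (_ + _).
by apply/polyP=> i; rewrite coef_take_poly coefC; case: i.
Qed.

Lemma frob (p N : nat) P : prime p -> p \in [pchar L] -> (p %| N)%N ->
  'X^p %| P ^+ N - (P`_0 ^+ N)%:P.
Proof.
move=> pp pc /dvdnP [j ->].
have pc' : p \in [pchar {poly L}] by rewrite pchar_poly.
have pn : ([pchar {poly L}]).-nat p by rewrite pnatE.
rewrite {1}(poly_split0 P) mulnC exprM exprDn_pchar // exprMn.
rewrite exprM rmorphXn /= rmorphXn /= subrXX.
by rewrite addrAC subrr add0r -mulrA dvdp_mull // dvdp_mulr.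
Qed.

End Gen.

Section Curve.
Variables (L : fieldType) (A B u v : L) (n m : nat).
Hypothesis hB : B != 0.
Hypothesis hv : v != 0.
Hypothesis hm : (m%:R : L) != 0.
Hypothesis hcurve : A * u ^+ n + B * v ^+ m = 1.

Definition xx : {poly L} := 'X + u%:P.
Definition Fy (Y : {poly L}) := A *: xx ^+ n + B *: Y ^+ m - 1.

Lemma sumS0 (Y1 Y2 : {poly L}) : Y1.[0] = v -> Y2.[0] = v ->
  (\sum_(i < m) Y1 ^+ (m.-1 - i) * Y2 ^+ i).[0] = m%:R * v ^+ m.-1.
Proof.
move=> h1 h2; rewrite horner_sum.
have E (i : 'I_m) : (Y1 ^+ (m.-1 - i) * Y2 ^+ i).[0] = v ^+ m.-1.
  rewrite hornerM !horner_exp h1 h2 -exprD subnK //.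
  by have := ltn_ord i; lia.
by under eq_bigr => i _ do rewrite E; rewrite sumr_const card_ord mulr_natl.
Qed.

Lemma mv_neq0 : m%:R * v ^+ m.-1 != 0.
Proof. by rewrite mulf_neq0 // expf_neq0. Qed.

Lemma FyB Y1 Y2 : Fy Y1 - Fy Y2 =
   B *: ((Y1 - Y2) * \sum_(i < m) Y1 ^+ (m.-1 - i) * Y2 ^+ i).
Proof. rewrite /Fy -subrXX scalerBr; rewrite -!mul_polyC; ring. Qed.

Lemma coprime_S k (S : {poly L}) : S.[0] != 0 -> coprimep ('X^k) S.
Proof.
move=> h; rewrite coprimep_sym; apply: coprimep_expr.
have -> : ('X : {poly L}) = 'X - 0%:P by rewrite subr0.
by rewrite coprimep_XsubC /root h.
Qed.

Lemma branch_uniq k Y1 Y2 : Y1.[0] = v -> Y2.[0] = v ->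
  'X^k %| Fy Y1 -> 'X^k %| Fy Y2 -> 'X^k %| Y1 - Y2.
Proof.
move=> h1 h2 d1 d2.
have : 'X^k %| Fy Y1 - Fy Y2 by rewrite dvdp_sub.
rewrite FyB dvdpZr // Gauss_dvdpl //.
by apply: coprime_S; rewrite sumS0 // mv_neq0.
Qed.

Lemma dvdX0 (P : {poly L}) : P.[0] = 0 -> 'X %| P.
Proof.
move=> h; rewrite -['X]expr1; apply: coef_dvdXn => i; case: i => // _.
by rewrite -[P`_0]horner_coef0.
Qed.

Lemma Fy0 Y : (Fy Y).[0] = A * u ^+ n + B * Y.[0] ^+ m - 1.
Proof. rewrite /Fy /xx !hornerE. done. Qed.

Lemma hensel k : (0 < k)%N -> exists Y, Y.[0] = v /\ 'X^k %| Fy Y.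
Proof.
elim: k => // k IH _.
case: k IH => [_|k IH].
  exists v%:P; split; first by rewrite hornerC.
  by rewrite expr1; apply: dvdX0; rewrite Fy0 hornerC hcurve subrr.
have [Y [Y0 /dvdpP [S hS]]] := IH isT.
pose c := - S.[0] / (B * (m%:R * v ^+ m.-1)).
pose Y' := Y + c%:P * 'X^(k.+1).
have Y'0 : Y'.[0] = v by rewrite /Y' !hornerE Y0 expr0n /= mulr0 addr0.
exists Y'; split => //.
have e := FyB Y' Y.
have -> : Fy Y' = 'X^(k.+1) * (S + B%:P * c%:P * \sum_(i < m) Y' ^+ (m.-1 - i) * Y ^+ i).
  rewrite -(subrK (Fy Y) (Fy Y')) e hS /Y' addrAC subrr add0r -mul_polyC; ring.
rewrite exprS mulrC dvdp_mul //; apply: dvdX0.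
rewrite hornerD !hornerM !hornerC sumS0 // /c.
by field; rewrite expf_neq0 ?hm ?hB.
Qed.
End Curve.

Section SQ.
Variable L : fieldType.

Lemma sq_lemma (f g : {poly L}) k : separable_poly f -> (3 < size f)%N ->
  (size g <= 3)%N -> f %| g ^+ k -> g = 0.
Proof.
move=> sf szf szg dv; apply/eqP/negPn/negP => gnz.
set d := gcdp f g; set e := f %/ d.
have fed : e * d = f by rewrite /e divpK // dvdp_gcdl.
have ced : coprimep e d by apply: (separable_coprime sf); rewrite fed.
have ceg : coprimep e g.
  apply/coprimepP => d' d'e d'g.
  have d'd : d' %| d.
    by rewrite dvdp_gcd d'g andbT (dvdp_trans d'e) // -fed dvdp_mulr.
  by move/coprimepP: ced; apply.
have ce : e %= 1.
  move/coprimepP: (coprimep_expr k ceg); apply => //.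
  by rewrite (dvdp_trans _ dv) // -fed dvdp_mulr.
have fnz : f != 0 by apply: (gt_size_poly_neq0 (n:=0)); lia.
have enz : e != 0 by apply: contraNneq fnz => e0; rewrite -fed e0 mul0r.
have dnz : d != 0 by apply: contraNneq fnz => e0; rewrite -fed e0 mulr0.
have se : size e = 1%N by apply/eqP; rewrite size_poly_eq1.
have sd : (size d <= size g)%N by apply: dvdp_leq => //; rewrite dvdp_gcdr.
have := size_mul enz dnz; rewrite fed se add1n /= => sfd.
by move: szf; rewrite sfd ltnNge (leq_trans sd szg).
Qed.
End SQ.

Section Fin.
Variables (L : fieldType) (A B u v : L) (n m : nat).
Hypothesis hA : A != 0.
Hypothesis hB : B != 0.
Hypothesis hv : v != 0.
Hypothesis hn : (n%:R : L) != 0.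
Hypothesis hn3 : (2 < n)%N.
Hypothesis hm0 : (0 < m)%N.

Definition ff : {poly L} := 1 - A *: xx u ^+ n.

Lemma Fy_ff Y : Fy A B u n m Y = B *: Y ^+ m - ff.
Proof. by rewrite /Fy /ff; rewrite -!mul_polyC; ring. Qed.

Lemma xxE : xx u = 'X - (- u)%:P.
Proof. by rewrite /xx polyCN opprK. Qed.

Lemma ff_coefn : ff`_n = - A.
Proof.
have h : (xx u ^+ n)`_n = 1.
  have := lead_coef_exp (xx u) n; rewrite lead_coefXaddC expr1n lead_coefE.
  by rewrite xxE size_exp_XsubC.
by rewrite /ff coefB coefZ h coef1; case: n hn3 => // k _; rewrite mulr1 sub0r.
Qed.

Lemma ff_size : (3 < size ff)%N.
Proof.
case: (ltnP 3 (size ff)) => // h.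
have : ff`_n = 0 by rewrite nth_default //; apply: leq_trans h _.
by rewrite ff_coefn => /eqP; rewrite oppr_eq0 (negPf hA).
Qed.

Lemma ff_neq0 : ff != 0.
Proof. by apply: (gt_size_poly_neq0 (n:=0)); have := ff_size; lia. Qed.

Lemma ff_sep : separable_poly ff.
Proof.
rewrite unlock.
have -> : ff^`() = (- (A * n%:R)) *: (xx u ^+ n.-1).
  rewrite /ff derivB derivC sub0r derivZ deriv_exp /xx derivD derivX derivC addr0 mul1r.
  by rewrite scaleNr -scalerA scaler_nat.
rewrite coprimepZr ?oppr_eq0 ?mulf_neq0 //; apply: coprimep_expr.
rewrite xxE coprimep_XsubC /root /ff !hornerE /= addNr expr0n.
by case: n hn3 => // k _ /=; rewrite mulr0 subr0 oner_eq0.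
Qed.

Definition q3 (a b c : L) : {poly L} := \poly_(i < 3) nth 0 [:: a; b; c] i.

Lemma q3E a b c : q3 a b c = a%:P + b%:P * 'X + c%:P * 'X^2.
Proof. by rewrite /q3 poly_def !big_ord_recr big_ord0 /= add0r !mul_polyC expr0 alg_polyC expr1. Qed.

Lemma q3_size a b c : (size (q3 a b c) <= 3)%N.
Proof. exact: size_poly. Qed.

Lemma q3_eq0 a b c : q3 a b c = 0 -> [/\ a = 0, b = 0 & c = 0].
Proof.
move=> h; have c0 i : (q3 a b c)`_i = 0 by rewrite h coef0.
have := c0 0%N; have := c0 1%N; have := c0 2%N; rewrite !coef_poly /=.
by move=> -> -> ->.
Qed.

Definition c0C (C : conic L) :=
  q3 (cXX C * u ^+ 2 + cXZ C * u + cZZ C) (2 * cXX C * u + cXZ C) (cXX C).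
Definition c1C (C : conic L) := q3 (cXY C * u + cYZ C) (cXY C) 0.

Lemma evalC C Y : conic_evalp C (xx u) Y 1 = cYY C *: Y ^+ 2 + c1C C * Y + c0C C.
Proof. by rewrite /conic_evalp /c1C /c0C !q3E /xx -!mul_polyC; ring. Qed.


Fixpoint EG (d0 d1 : {poly L}) k : {poly L} * {poly L} :=
  if k is k'.+1 then let p := EG d0 d1 k' in (- d0 * p.2, p.1 - d1 * p.2)
  else (1, 0).

Lemma EG_norm d0 d1 k :
  (EG d0 d1 k).1 ^+ 2 - d1 * (EG d0 d1 k).1 * (EG d0 d1 k).2
  + d0 * (EG d0 d1 k).2 ^+ 2 = d0 ^+ k.
Proof.
elim: k => [|k IH] /=; first by rewrite expr1n !mulr0 subr0 expr0n /= mulr0 addr0.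
by rewrite [d0 ^+ k.+1]exprS -IH; ring.
Qed.

Lemma EG_cong K d0 d1 Y k : 'X^K %| Y ^+ 2 + d1 * Y + d0 ->
  'X^K %| Y ^+ k - ((EG d0 d1 k).1 + Y * (EG d0 d1 k).2).
Proof.
move=> dQ; elim: k => [|k IH] /=; first by rewrite mulr0 addr0 subrr dvdp0.
have -> : Y ^+ k.+1 - (- d0 * (EG d0 d1 k).2 + Y * ((EG d0 d1 k).1 - d1 * (EG d0 d1 k).2))
  = Y * (Y ^+ k - ((EG d0 d1 k).1 + Y * (EG d0 d1 k).2))
    + (EG d0 d1 k).2 * (Y ^+ 2 + d1 * Y + d0) by rewrite [Y ^+ k.+1]exprS; ring.
by rewrite dvdp_add // dvdp_mull.
Qed.

Lemma finite_contact C : conic_nonzero C -> exists K0, forall K, (K0 <= K)%N ->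
  forall Y, Y.[0] = v -> 'X^K %| Fy A B u n m Y -> ~ 'X^K %| conic_evalp C (xx u) Y 1.
Proof.
move=> Cnz.
have ffnz := ff_neq0.
have Bm0 : (0 : {poly L}) ^+ m = 0 by rewrite expr0n; case: m hm0.
case: (eqVneq (cYY C) 0) => c2.
- set c1 := c1C C; set c0 := c0C C.
  pose T3 := B *: (- c0) ^+ m - c1 ^+ m * ff.
  exists (size T3) => K hK Y Y0 dF dC.
  rewrite evalC c2 scale0r add0r -/c1 -/c0 in dC.
  have dT : 'X^K %| T3.
    have -> : T3 = c1 ^+ m * Fy A B u n m Y - B *: ((c1 * Y) ^+ m - (- c0) ^+ m).
      by rewrite Fy_ff /T3 exprMn -!mul_polyC; ring.
    rewrite subrXX opprK dvdp_sub ?dvdp_mull //.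
    by rewrite dvdpZr // dvdp_mulr.
  have T0 : T3 = 0 by apply: dvdXn_small dT hK.
  have fd : ff %| (- c0) ^+ m.
    move/eqP: T0; rewrite subr_eq0 => /eqP e.
    by rewrite -(dvdpZr _ _ hB) e dvdp_mull.
  have : - c0 = 0.
    by apply: (sq_lemma ff_sep ff_size _ fd); rewrite size_polyN q3_size.
  move/eqP; rewrite oppr_eq0 => /eqP c00.
  move: T0; rewrite /T3 c00 oppr0 Bm0 scaler0 sub0r => /eqP.
  rewrite oppr_eq0 mulf_eq0 (negPf ffnz) orbF expf_eq0 => /andP [_ /eqP c10].
  have [e1 e2 _] := q3_eq0 c10.
  have [e3 e4 e5] := q3_eq0 c00.
  have hXZ : cXZ C = 0 by move: e4; rewrite e5 mulr0 mul0r add0r.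
  have hZZ : cZZ C = 0 by move: e3; rewrite e5 hXZ !mul0r !add0r.
  have hYZ : cYZ C = 0 by move: e1; rewrite e2 mul0r add0r.
  by apply: Cnz; rewrite e5 c2 hZZ e2 hXZ hYZ.
- set d1 := (cYY C)^-1 *: c1C C; set d0 := (cYY C)^-1 *: c0C C.
  set E := (EG d0 d1 m).1; set G := (EG d0 d1 m).2.
  set R := ff - B *: E.
  pose T := B ^+ 2 *: d0 ^+ m - ff * (ff - (R + R) - B *: (d1 * G)).
  pose T2 := B *: (- d1) ^+ m - ff.
  exists (maxn (size T) (size T2)) => K; rewrite geq_max => /andP [hK1 hK2] Y Y0 dF dC.
  have eQ : Y ^+ 2 + d1 * Y + d0 = (cYY C)^-1 *: conic_evalp C (xx u) Y 1.
    by rewrite evalC !scalerDr scalerA mulVf // scale1r /d1 /d0 -!scalerAl.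
  have dQ : 'X^K %| Y ^+ 2 + d1 * Y + d0 by rewrite eQ dvdpZr ?invr_eq0.
  have hEG := EG_cong m dQ.
  have dR : 'X^K %| R - B *: (Y * G).
    have -> : R - B *: (Y * G) = - Fy A B u n m Y + B *: (Y ^+ m - (E + Y * G)).
      by rewrite Fy_ff /R -!mul_polyC; ring.
    by rewrite dvdp_add ?dvdpNr // dvdpZr.
  have dT : 'X^K %| T.
    have -> : T = (B *: G) ^+ 2 * (Y ^+ 2 + d1 * Y + d0)
        + (R - B *: (Y * G)) * (R + B *: (Y * G) + d1 * (B *: G)).
      rewrite /T -(EG_norm d0 d1 m) -/E -/G /R -!mul_polyC; ring.
    by apply: dvdp_add; [apply: dvdp_mull | apply: dvdp_mulr].
  have T0 : T = 0 by apply: dvdXn_small dT hK1.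
  have fd : ff %| d0 ^+ m.
    move/eqP: T0; rewrite subr_eq0 => /eqP e.
    by rewrite -(dvdpZr _ _ (expf_neq0 2 hB)) e dvdp_mulr.
  have d00 : d0 = 0.
    apply: (sq_lemma ff_sep ff_size _ fd).
    by apply: leq_trans (size_scale_leq _ _) (q3_size _ _ _).
  rewrite d00 addr0 in dQ.
  have dY : 'X^K %| Y + d1.
    have cY : coprimep ('X^K) Y by apply: coprime_S; rewrite Y0.
    have e : Y ^+ 2 + d1 * Y = (Y + d1) * Y by ring.
    by move: dQ; rewrite e Gauss_dvdpl.
  have dT2 : 'X^K %| T2.
    have -> : T2 = Fy A B u n m Y - B *: (Y ^+ m - (- d1) ^+ m).
      by rewrite Fy_ff /T2 -!mul_polyC; ring.
    by rewrite dvdp_sub // dvdpZr // subrXX opprK dvdp_mulr.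
  have T20 : T2 = 0 by apply: dvdXn_small dT2 hK2.
  have fd2 : ff %| (- d1) ^+ m.
    move/eqP: T20; rewrite subr_eq0 => /eqP e.
    by rewrite -(dvdpZr _ _ hB) e.
  have : - d1 = 0.
    apply: (sq_lemma ff_sep ff_size _ fd2); rewrite size_polyN.
    by apply: leq_trans (size_scale_leq _ _) (q3_size _ _ _).
  move=> d10; move: T20; rewrite /T2 d10 Bm0 scaler0 sub0r => /eqP.
  by rewrite oppr_eq0 (negPf ffnz).
Qed.
End Fin.

Section Uniq.
Variables (L : fieldType) (u : L).

Definition evi (C : conic L) (y : nat -> L) (i : nat) : L :=
  let a := cXY C * u + cYZ C in let b := cXY C in let c2 := cYY C in
  match i with
  | 0 => c2 * (y 0%N * y 0%N) + a * y 0%N + (cXX C * u ^+ 2 + cXZ C * u + cZZ C)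
  | 1 => c2 * (y 0%N * y 1%N + y 1%N * y 0%N) + (a * y 1%N + b * y 0%N) + (2 * cXX C * u + cXZ C)
  | 2 => c2 * (y 0%N * y 2%N + y 1%N * y 1%N + y 2%N * y 0%N) + (a * y 2%N + b * y 1%N) + cXX C
  | 3 => c2 * (y 0%N * y 3%N + y 1%N * y 2%N + y 2%N * y 1%N + y 3%N * y 0%N) + (a * y 3%N + b * y 2%N) + 0
  | 4 => c2 * (y 0%N * y 4%N + y 1%N * y 3%N + y 2%N * y 2%N + y 3%N * y 1%N + y 4%N * y 0%N)
          + (a * y 4%N + b * y 3%N) + 0
  | _ => 0
  end.

Lemma evi_coef C Y i : (i < 5)%N ->
  (conic_evalp C (xx u) Y 1)`_i = evi C (fun j => Y`_j) i.
Proof.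
move=> hi; rewrite evalC /c1C /c0C q3E polyC0 mul0r addr0 !coefD coefZ expr2 coefM.
rewrite mulrDl coefD -mulrA !coefCM coefXM coef_poly.
case: i hi => [|[|[|[|[|i]]]]] // _; rewrite !big_ord_recr big_ord0 /= ?add0r.
all: by rewrite ?mulr0 ?addr0.
Qed.

Lemma core D (y : nat -> L) : y 2%N != 0 ->
  2 * cYY D * y 0%N + cXY D * u + cYZ D = 0 ->
  (forall i, (i < 5)%N -> evi D y i = 0) ->
  cXX D = 0 /\ cYY D = 0 /\ cZZ D = 0 /\ cXY D = 0 /\ cXZ D = 0 /\ cYZ D = 0.
Proof.
move=> y2 Dy he.
have hYZ : cYZ D = - (2 * cYY D * y 0%N + cXY D * u).
  by rewrite -[cYZ D]subr0 -Dy; ring.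
have h3 : (2 * cYY D * y 1%N + cXY D) * y 2%N = 0.
  by rewrite -(he 3%N isT) /= hYZ; ring.
move/eqP: h3; rewrite mulf_eq0 (negPf y2) orbF => /eqP h3.
have hXY : cXY D = - (2 * cYY D * y 1%N) by rewrite -[cXY D]subr0 -h3; ring.
have h4 : cYY D * y 2%N ^+ 2 = 0.
  by rewrite -(he 4%N isT) /= hYZ hXY; ring.
move/eqP: h4; rewrite mulf_eq0 expf_eq0 (negPf y2) andbF orbF => /eqP hYY.
rewrite hYY ?mulr0 ?mul0r ?oppr0 in hXY.
rewrite hYY hXY ?mulr0 ?mul0r ?add0r ?oppr0 in hYZ.
have hXX : cXX D = 0.
  by rewrite -(he 2%N isT) /= hYY hXY hYZ; ring.
have hXZ : cXZ D = 0.
  by rewrite -(he 1%N isT) /= hYY hXY hYZ hXX; ring.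
have hZZ : cZZ D = 0.
  by rewrite -(he 0%N isT) /= hYY hXY hYZ hXX hXZ; ring.
by do !split.
Qed.

Definition Dy (C : conic L) (v : L) := 2 * cYY C * v + cXY C * u + cYZ C.

Definition cdiff (C H : conic L) (l : L) : conic L :=
  mkConic (cXX C - l * cXX H) (cYY C - l * cYY H) (cZZ C - l * cZZ H)
          (cXY C - l * cXY H) (cXZ C - l * cXZ H) (cYZ C - l * cYZ H).

Lemma evi_diff C H l y i : evi (cdiff C H l) y i = evi C y i - l * evi H y i.
Proof. by case: i => [|[|[|[|[|i]]]]] /=; ring. Qed.

Lemma uniq_conic C H (y : nat -> L) : y 2%N != 0 -> conic_nonzero H -> conic_nonzero C ->
  (forall i, (i < 5)%N -> evi C y i = 0) -> (forall i, (i < 5)%N -> evi H y i = 0) ->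
  conic_prop C H.
Proof.
move=> y2 Hnz Cnz eC eH.
have DH : Dy H (y 0%N) != 0.
  apply/negP => /eqP h; apply: Hnz.
  exact: core y2 h eH.
pose l := Dy C (y 0%N) / Dy H (y 0%N).
have e : forall i, (i < 5)%N -> evi (cdiff C H l) y i = 0.
  by move=> i hi; rewrite evi_diff eC // eH // mulr0 subr0.
have DD : 2 * cYY (cdiff C H l) * y 0%N + cXY (cdiff C H l) * u + cYZ (cdiff C H l) = 0.
  rewrite /= /l; move: DH; rewrite /Dy => DH; field.
  by [].
have [h1 [h2 [h3 [h4 [h5 h6]]]]] := core y2 DD e.
move: h1 h2 h3 h4 h5 h6 => /= /subr0_eq h1 /subr0_eq h2 /subr0_eq h3 /subr0_eq h4 /subr0_eq h5 /subr0_eq h6.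
exists l; split; last by rewrite h1 h2 h3 h4 h5 h6.
apply/negP => /eqP l0; apply: Cnz.
by rewrite h1 h2 h3 h4 h5 h6 l0 !mul0r.
Qed.

End Uniq.

Lemma nonflex (L : fieldType) (A B u v : L) (n2 m2 : nat) (Y : {poly L}) :
  Y.[0] = v -> 'X^3 %| Fy A B u n2.+2 m2.+2 Y -> u != 0 -> A != 0 ->
  (n2.+2)%:R != 0 :> L ->
  ((n2.+2)%:R - 1) * (m2.+2)%:R * (B * v ^+ m2.+2)
    + ((m2.+2)%:R - 1) * (n2.+2)%:R * (A * u ^+ n2.+2) != 0 ->
  Y`_2 != 0.
Proof.
move=> Y0 dF hu hA hn hS.
have c1 := dvdXn_coef dF (isT : (1 < 3)%N).
have c2 := dvdXn_coef dF (isT : (2 < 3)%N).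
set F := Fy A B u n2.+2 m2.+2 Y in c1 c2.
have d1 : (F^`()).[0] = 0 by rewrite horner_coef0 coef_deriv c1 mul0rn.
have d2 : (F^`()^`()).[0] = 0 by rewrite horner_coef0 !coef_deriv c2 !mul0rn.
have y0 : Y`_0 = v by rewrite -horner_coef0.
have y1 : (Y^`()).[0] = Y`_1 by rewrite horner_coef0 coef_deriv mulr1n.
have y2 : (Y^`()^`()).[0] = Y`_2 *+ 2 by rewrite horner_coef0 !coef_deriv mulr1n.
move: d1 d2; rewrite /F /Fy /xx.
have dx : ('X + u%:P)^`() = 1 :> {poly L} by rewrite derivD derivX derivC addr0.
rewrite derivB derivC subr0 derivD !derivZ !deriv_exp dx mul1r.
rewrite derivD !derivZ derivMn deriv_exp dx mul1r derivMn derivM deriv_exp.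
rewrite !(hornerMn, hornerD, hornerZ, hornerM, horner_exp, hornerC, hornerX) y1 y2 Y0 add0r.
move=> e1 e2; apply/negP => /eqP y20; move: e2; rewrite y20 => e2.
move: hS e1 e2; rewrite /= !exprS => hS e1 e2.
set S := (_ + _) in hS.
have key : (n2.+2%:R * A * u ^+ n2 * (u * u)) * S =
   (m2.+2%:R * B * v ^+ m2 * (v * v) * (u * u)) *
     (A * (u ^+ n2 *+ n2.+1 *+ n2.+2) +
      B * ((0 *+ 2 * (v * v ^+ m2) + Y`_1 * (Y`_1 * v ^+ m2 *+ m2.+1)) *+ m2.+2))
   - ((m2.+2%:R - 1) * (u * u) * (m2.+2%:R * B * v ^+ m2 * v * Y`_1 - n2.+2%:R * A * u ^+ n2 * u)) *
     (A * (u * u ^+ n2 *+ n2.+2) + B * (Y`_1 * (v * v ^+ m2) *+ m2.+2)).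
  rewrite /S; ring.
move: key; rewrite e1 e2 !mulr0 subr0 => /eqP.
rewrite !mulf_eq0 (negPf hS) (negPf hn) (negPf hA) (negPf hu) expf_eq0 (negPf hu) !andbF /=.
done.
Qed.

Lemma step_exists (P : nat -> Prop) a K0 : P a -> (forall K, (K0 <= K)%N -> ~ P K) ->
  exists k, [/\ (a <= k)%N, P k & ~ P k.+1].
Proof.
move=> Pa HK.
suff H : forall d a, (K0 <= a + d)%N -> P a -> exists k, [/\ (a <= k)%N, P k & ~ P k.+1].
  by apply: (H K0 a) => //; rewrite leq_addl.
elim=> [|d IH] b hb Pb.
  by exfalso; apply: (HK b) => //; rewrite addn0 in hb.
case: (classic (P b.+1)) => h.
  have hb' : (K0 <= b.+1 + d)%N by rewrite addSnnS.
  have [k [h1 h2 h3]] := IH b.+1 hb' h.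
  by exists k; split => //; apply: ltnW.
by exists b.
Qed.

Lemma eval_diff (L : fieldType) u (C : conic L) Y1 Y2 :
  conic_evalp C (xx u) Y1 1 - conic_evalp C (xx u) Y2 1 =
  (Y1 - Y2) * (cYY C *: (Y1 + Y2) + c1C u C).
Proof. by rewrite !evalC -!mul_polyC; ring. Qed.

Lemma osc_generic (L : fieldType) (A B u v : L) (n2 m2 : nat) (H : conic L) :
  A != 0 -> B != 0 -> u != 0 -> v != 0 ->
  (n2.+2)%:R != 0 :> L -> (m2.+2)%:R != 0 :> L -> (0 < n2)%N ->
  A * u ^+ n2.+2 + B * v ^+ m2.+2 = 1 ->
  ((n2.+2)%:R - 1) * (m2.+2)%:R * (B * v ^+ m2.+2)
    + ((m2.+2)%:R - 1) * (n2.+2)%:R * (A * u ^+ n2.+2) != 0 ->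
  conic_nonzero H ->
  (forall Y, Y.[0] = v -> 'X^5 %| Fy A B u n2.+2 m2.+2 Y ->
      'X^5 %| conic_evalp H (xx u) Y 1) ->
  osculating_conic A B n2.+2 m2.+2 u v H.
Proof.
move=> hA hB hu hv hn hm hn2 hc hS Hnz Hc.
split => //.
have P5 : imult_ge A B n2.+2 m2.+2 u v H 5.
  have [Y [Y0 dY]] := hensel hB hv hm hc (isT : (0 < 5)%N).
  by exists Y; split => //; apply: Hc.
have [K0 HK0] := finite_contact u hA hB hv hn hn2 (isT : (1 <= m2.+2)%N) Hnz.
have [k [k5 Pk Pk1]] : exists k, [/\ (5 <= k)%N, imult_ge A B n2.+2 m2.+2 u v H k
     & ~ imult_ge A B n2.+2 m2.+2 u v H k.+1].
  apply: (step_exists P5 (K0 := K0)) => K hK [Y [Y0 dF dH]].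
  exact: (HK0 K hK Y Y0 dF dH).
exists k; split; first by split.
move=> C Cnz Cnp [YC [YC0 dFC dCC]].
have [YH [YH0 dFH dHH]] := Pk.
apply: Cnp.
have dFC5 := dvdXn_le k5 dFC; have dFH5 := dvdXn_le k5 dFH.
have dCC5 := dvdXn_le k5 dCC; have dHH5 := dvdXn_le k5 dHH.
have dd := branch_uniq hB hv hm YC0 YH0 dFC5 dFH5.
have dCH : 'X^5 %| conic_evalp C (xx u) YH 1.
  have -> : conic_evalp C (xx u) YH 1 = conic_evalp C (xx u) YC 1 -
     (conic_evalp C (xx u) YC 1 - conic_evalp C (xx u) YH 1) by rewrite opprB addrC subrK.
  by rewrite eval_diff dvdp_sub // dvdp_mulr.
have y2 : YH`_2 != 0.
  apply: (nonflex YH0 (dvdXn_le (isT : (3 <= 5)%N) dFH5)) => //.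
apply: (uniq_conic (u := u) y2 Hnz Cnz) => i hi.
  by rewrite -evi_coef // (dvdXn_coef dCH).
by rewrite -evi_coef // (dvdXn_coef dHH5).
Qed.

Section Cases.
Variables (L : fieldType) (A B u v : L) (n2 m2 p : nat) (Y : {poly L}).
Hypothesis pp : prime p.
Hypothesis pc : p \in [pchar L].
Hypothesis p5 : (5 < p)%N.
Hypothesis Y0 : Y.[0] = v.
Hypothesis hF : 'X^5 %| Fy A B u n2.+2 m2.+2 Y.

Lemma frobx N : (p %| N)%N -> 'X^5 %| xx u ^+ N - (u ^+ N)%:P.
Proof.
move=> h; have := frob (xx u) pp pc h.
rewrite /xx coefD coefX coefC /= add0r => /(dvdXn_le (ltnW p5)); apply.
Qed.

Lemma froby N : (p %| N)%N -> 'X^5 %| Y ^+ N - (v ^+ N)%:P.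
Proof.
move=> h; have := frob Y pp pc h.
rewrite -horner_coef0 Y0 => /(dvdXn_le (ltnW p5)); apply.
Qed.

Lemma comb (F D1 D2 a b c : {poly L}) : 'X^5 %| F -> 'X^5 %| D1 -> 'X^5 %| D2 ->
  'X^5 %| a * F + b * D1 + c * D2.
Proof. by move=> h1 h2 h3; rewrite !dvdp_add // dvdp_mull. Qed.

Lemma contact1 : (p %| n2)%N -> (p %| m2)%N ->
  'X^5 %| conic_evalp (mkConic (A * u ^+ n2) (B * v ^+ m2) (-1) 0 0 0) (xx u) Y 1.
Proof.
move=> hn hm; have fx := frobx hn; have fy := froby hm.
have -> : conic_evalp (mkConic (A * u ^+ n2) (B * v ^+ m2) (-1) 0 0 0) (xx u) Y 1
   = 1 * Fy A B u n2.+2 m2.+2 Y + (- A%:P * xx u ^+ 2) * (xx u ^+ n2 - (u ^+ n2)%:P)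
     + (- B%:P * Y ^+ 2) * (Y ^+ m2 - (v ^+ m2)%:P).
  rewrite /conic_evalp /Fy /= !exprS -!mul_polyC; ring.
exact: comb.
Qed.


Lemma pwE (x : {poly L}) a b : x ^+ (a * n2 + b) = (x ^+ n2) ^+ a * x ^+ b.
Proof. by rewrite exprD mulnC exprM. Qed.
Lemma pwEm (x : {poly L}) a b : x ^+ (a * m2 + b) = (x ^+ m2) ^+ a * x ^+ b.
Proof. by rewrite exprD mulnC exprM. Qed.
Lemma pwS (x : L) a b k : x ^+ (a * k + b) = (x ^+ k) ^+ a * x ^+ b.
Proof. by rewrite exprD mulnC exprM. Qed.

Ltac crunch := rewrite /conic_evalp /Fy /= !exprS ?pwE ?pwEm ?pwS -!mul_polyC; ring.

Lemma contact2 : (p %| n2.+3)%N -> (p %| m2.+3)%N ->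
  'X^5 %| conic_evalp (mkConic 0 0 0 (-1) (B * v ^+ m2.+3) (A * u ^+ n2.+3)) (xx u) Y 1.
Proof.
move=> hn hm; have fx := frobx hn; have fy := froby hm.
have -> : conic_evalp (mkConic 0 0 0 (-1) (B * v ^+ m2.+3) (A * u ^+ n2.+3)) (xx u) Y 1
   = (xx u * Y) * Fy A B u n2.+2 m2.+2 Y + (- A%:P * Y) * (xx u ^+ n2.+3 - (u ^+ n2.+3)%:P)
     + (- B%:P * xx u) * (Y ^+ m2.+3 - (v ^+ m2.+3)%:P) by crunch.
exact: comb.
Qed.

Lemma contact3 : (p %| 2 * n2 + 3)%N -> (p %| 2 * m2 + 3)%N ->
  'X^5 %| conic_evalp (mkConic (A ^+ 4 * u ^+ (4 * n2 + 6)) (B ^+ 4 * v ^+ (4 * m2 + 6)) 1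
                     (- (2%:R * A ^+ 2 * B ^+ 2 * u ^+ (2 * n2 + 3) * v ^+ (2 * m2 + 3)))
                     (- (2%:R * A ^+ 2 * u ^+ (2 * n2 + 3)))
                     (- (2%:R * B ^+ 2 * v ^+ (2 * m2 + 3)))) (xx u) Y 1.
Proof.
move=> hn hm; have fx := frobx hn; have fy := froby hm.
set al := A%:P * xx u ^+ n2.+2; set be := B%:P * Y ^+ m2.+2.
set Pt := (A ^+ 2 * u ^+ (2 * n2 + 3))%:P * xx u; set Qt := (B ^+ 2 * v ^+ (2 * m2 + 3))%:P * Y.
set a2 := A%:P ^+ 2 * xx u * xx u ^+ (2 * n2 + 3); set b2 := B%:P ^+ 2 * Y * Y ^+ (2 * m2 + 3).
have -> : conic_evalp (mkConic (A ^+ 4 * u ^+ (4 * n2 + 6)) (B ^+ 4 * v ^+ (4 * m2 + 6)) 1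
                     (- (2%:R * A ^+ 2 * B ^+ 2 * u ^+ (2 * n2 + 3) * v ^+ (2 * m2 + 3)))
                     (- (2%:R * A ^+ 2 * u ^+ (2 * n2 + 3)))
                     (- (2%:R * B ^+ 2 * v ^+ (2 * m2 + 3)))) (xx u) Y 1
   = (- ((al + be + 1) * (- al + be + 1) * (al - be + 1))) * Fy A B u n2.+2 m2.+2 Y
     + (- (A%:P ^+ 2 * xx u) * (Pt + a2 - 2%:R * Qt - 2%:R)) * (xx u ^+ (2 * n2 + 3) - (u ^+ (2 * n2 + 3))%:P)
     + (- (B%:P ^+ 2 * Y) * (Qt + b2 - 2%:R * a2 - 2%:R)) * (Y ^+ (2 * m2 + 3) - (v ^+ (2 * m2 + 3))%:P).
  rewrite /al /be /Pt /Qt /a2 /b2; crunch.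
exact: comb.
Qed.

Lemma contact4 : (p %| n2.+1)%N -> (p %| 2 * m2 + 3)%N ->
  'X^5 %| conic_evalp (mkConic (- (A ^+ 2 * u ^+ (2 * n2 + 2))) 0 (-1) 0
                     (2%:R * A * u ^+ n2.+1) (B ^+ 2 * v ^+ (2 * m2 + 3))) (xx u) Y 1.
Proof.
move=> hn hm; have fx := frobx hn; have fy := froby hm.
set al := A%:P * xx u ^+ n2.+2; set be := B%:P * Y ^+ m2.+2.
set Dx := xx u ^+ n2.+1 - (u ^+ n2.+1)%:P.
have -> : conic_evalp (mkConic (- (A ^+ 2 * u ^+ (2 * n2 + 2))) 0 (-1) 0
                     (2%:R * A * u ^+ n2.+1) (B ^+ 2 * v ^+ (2 * m2 + 3))) (xx u) Y 1
   = (be - al + 1) * Fy A B u n2.+2 m2.+2 Y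
     + (A%:P * xx u * (2%:R * (al - 1) - A%:P * xx u * Dx)) * Dx
     + (- (B%:P ^+ 2 * Y)) * (Y ^+ (2 * m2 + 3) - (v ^+ (2 * m2 + 3))%:P).
  rewrite /al /be /Dx; crunch.
exact: comb.
Qed.

Lemma contact5 : (p %| n2.+1)%N -> (p %| m2.+3)%N ->
  'X^5 %| conic_evalp (mkConic 0 0 (B * v ^+ m2.+3) (A * u ^+ n2.+1) 0 (-1)) (xx u) Y 1.
Proof.
move=> hn hm; have fx := frobx hn; have fy := froby hm.
have -> : conic_evalp (mkConic 0 0 (B * v ^+ m2.+3) (A * u ^+ n2.+1) 0 (-1)) (xx u) Y 1
   = Y * Fy A B u n2.+2 m2.+2 Y + (- A%:P * xx u * Y) * (xx u ^+ n2.+1 - (u ^+ n2.+1)%:P)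
     + (- B%:P) * (Y ^+ m2.+3 - (v ^+ m2.+3)%:P) by crunch.
exact: comb.
Qed.

Lemma contact6 : (p %| n2.+1)%N -> (p %| m2)%N ->
  'X^5 %| conic_evalp (mkConic 0 (B * v ^+ m2) (-1) 0 (A * u ^+ n2.+1) 0) (xx u) Y 1.
Proof.
move=> hn hm; have fx := frobx hn; have fy := froby hm.
have -> : conic_evalp (mkConic 0 (B * v ^+ m2) (-1) 0 (A * u ^+ n2.+1) 0) (xx u) Y 1
   = 1 * Fy A B u n2.+2 m2.+2 Y + (- A%:P * xx u) * (xx u ^+ n2.+1 - (u ^+ n2.+1)%:P)
     + (- B%:P * Y ^+ 2) * (Y ^+ m2 - (v ^+ m2)%:P) by crunch.
exact: comb.
Qed.

Lemma contact7 : (p %| n2)%N -> (p %| m2.+1)%N ->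
  'X^5 %| conic_evalp (mkConic (A * u ^+ n2) 0 (-1) 0 0 (B * v ^+ m2.+1)) (xx u) Y 1.
Proof.
move=> hn hm; have fx := frobx hn; have fy := froby hm.
have -> : conic_evalp (mkConic (A * u ^+ n2) 0 (-1) 0 0 (B * v ^+ m2.+1)) (xx u) Y 1
   = 1 * Fy A B u n2.+2 m2.+2 Y + (- A%:P * xx u ^+ 2) * (xx u ^+ n2 - (u ^+ n2)%:P)
     + (- B%:P * Y) * (Y ^+ m2.+1 - (v ^+ m2.+1)%:P) by crunch.
exact: comb.
Qed.

Lemma contact8 : (p %| 2 * n2 + 3)%N -> (p %| m2.+1)%N ->
  'X^5 %| conic_evalp (mkConic 0 (- (B ^+ 2 * v ^+ (2 * m2 + 2))) (-1) 0
                     (A ^+ 2 * u ^+ (2 * n2 + 3)) (2%:R * B * v ^+ m2.+1)) (xx u) Y 1.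
Proof.
move=> hn hm; have fx := frobx hn; have fy := froby hm.
set al := A%:P * xx u ^+ n2.+2; set be := B%:P * Y ^+ m2.+2.
set Dy := Y ^+ m2.+1 - (v ^+ m2.+1)%:P.
have -> : conic_evalp (mkConic 0 (- (B ^+ 2 * v ^+ (2 * m2 + 2))) (-1) 0
                     (A ^+ 2 * u ^+ (2 * n2 + 3)) (2%:R * B * v ^+ m2.+1)) (xx u) Y 1
   = (al - be + 1) * Fy A B u n2.+2 m2.+2 Y
     + (- (A%:P ^+ 2 * xx u)) * (xx u ^+ (2 * n2 + 3) - (u ^+ (2 * n2 + 3))%:P)
     + (B%:P * Y * (2%:R * (be - 1) - B%:P * Y * Dy)) * Dy.
  rewrite /al /be /Dy; crunch.
exact: comb.
Qed.

Lemma contact9 : (p %| n2.+3)%N -> (p %| m2.+1)%N ->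
  'X^5 %| conic_evalp (mkConic 0 0 (A * u ^+ n2.+3) (B * v ^+ m2.+1) (-1) 0) (xx u) Y 1.
Proof.
move=> hn hm; have fx := frobx hn; have fy := froby hm.
have -> : conic_evalp (mkConic 0 0 (A * u ^+ n2.+3) (B * v ^+ m2.+1) (-1) 0) (xx u) Y 1
   = xx u * Fy A B u n2.+2 m2.+2 Y + (- A%:P) * (xx u ^+ n2.+3 - (u ^+ n2.+3)%:P)
     + (- B%:P * xx u * Y) * (Y ^+ m2.+1 - (v ^+ m2.+1)%:P) by crunch.
exact: comb.
Qed.
End Cases.

Definition mdet (L : fieldType) (C : conic L) :=
  4%:R * cXX C * cYY C * cZZ C - cXX C * cYZ C ^+ 2 - cZZ C * cXY C ^+ 2
  + cXY C * cXZ C * cYZ C - cYY C * cXZ C ^+ 2.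

Lemma irr_det (L : fieldType) (C : conic L) : mdet C != 0 -> conic_irreducible C.
Proof.
move=> h l1 l2 l3 k1 k2 k3 [e1 [e2 [e3 [e4 [e5 e6]]]]].
by move: h; rewrite /mdet e1 e2 e3 e4 e5 e6; apply/negP/negPn/eqP; ring.
Qed.

Section Sv.
Variables (L : fieldType) (al be : L).
Hypothesis two : 2 != 0 :> L.
Hypothesis hal : al != 0.
Hypothesis hbe : be != 0.
Hypothesis hc : al + be = 1.
Lemma four : 4 != 0 :> L.
Proof. have -> : 4 = 2 * 2 :> L by ring. by rewrite mulf_neq0. Qed.
Definition Sx (x y : L) := (x + 1) * (y + 2) * be + (y + 1) * (x + 2) * al.

Lemma S1 : Sx 0 0 != 0.
Proof. have -> : Sx 0 0 = 2 * (al + be) by rewrite /Sx; ring. by rewrite hc mulr1. Qed.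
Lemma S2 : Sx (0 - 3) (0 - 3) != 0.
Proof. have -> : Sx (0 - 3) (0 - 3) = 2 * (al + be) by rewrite /Sx; ring. by rewrite hc mulr1. Qed.
Lemma S3 : Sx ((0 - 3) / 2) ((0 - 3) / 2) != 0.
Proof.
have -> : Sx ((0 - 3) / 2) ((0 - 3) / 2) = - (al + be) / (2 * 2).
  by rewrite /Sx; field; rewrite four two.
by rewrite hc mulf_neq0 ?invr_eq0 ?mulf_neq0 // oppr_eq0 oner_eq0.
Qed.
Lemma S4 : Sx (0 - 1) ((0 - 3) / 2) != 0.
Proof.
have -> : Sx (0 - 1) ((0 - 3) / 2) = - al / 2 by rewrite /Sx; field; rewrite ?two.
by rewrite mulf_neq0 ?oppr_eq0 ?invr_eq0.
Qed.
Lemma S5 : Sx (0 - 1) (0 - 3) != 0.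
Proof. have -> : Sx (0 - 1) (0 - 3) = - (2 * al) by rewrite /Sx; ring. by rewrite oppr_eq0 mulf_neq0. Qed.
Lemma S6 : Sx (0 - 1) 0 != 0.
Proof. have -> : Sx (0 - 1) 0 = al by rewrite /Sx; ring. by []. Qed.
Lemma S7 : Sx 0 (0 - 1) != 0.
Proof. have -> : Sx 0 (0 - 1) = be by rewrite /Sx; ring. by []. Qed.
Lemma S8 : Sx ((0 - 3) / 2) (0 - 1) != 0.
Proof.
have -> : Sx ((0 - 3) / 2) (0 - 1) = - be / 2 by rewrite /Sx; field; rewrite ?two.
by rewrite mulf_neq0 ?oppr_eq0 ?invr_eq0.
Qed.
Lemma S9 : Sx (0 - 3) (0 - 1) != 0.
Proof. have -> : Sx (0 - 3) (0 - 1) = - (2 * be) by rewrite /Sx; ring. by rewrite oppr_eq0 mulf_neq0. Qed.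
End Sv.

Lemma exn (n : nat) : (2 < n)%N -> exists n2, n = n2.+2 /\ (0 < n2)%N.
Proof. by move=> h; exists (n - 2)%N; split; lia. Qed.

Lemma natE (n2 : nat) : (n2.+2 - 2 = n2)%N /\ (n2.+2 + 1 = n2.+3)%N /\
  (2 * n2.+2 - 1 = 2 * n2 + 3)%N /\ (4 * n2.+2 - 2 = 4 * n2 + 6)%N /\
  (2 * n2.+2 - 2 = 2 * n2 + 2)%N /\ (n2.+2 - 1 = n2.+1)%N.
Proof. do !split; lia. Qed.

Lemma e46 k : (4 * k + 6 = (2 * k + 3) * 2)%N.
Proof. lia. Qed.

Theorem proposition3p6 (p : nat) (F : finFieldType) (a b : F) (m n : nat) :
  prime p -> (5 < p)%N -> p \in [pchar F] ->
  a != 0 -> b != 0 -> (2 < m)%N -> (m <= n)%N -> ~~ (p %| m * n)%N ->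
  classical_wrt a b n m 1 -> ~ classical_wrt a b n m 2 ->
  forall (L : fieldType) (iota : {rmorphism F -> L}) (u v : L),
    iota a * u ^+ n + iota b * v ^+ m = 1 -> u != 0 -> v != 0 ->
    let A := iota a in let B := iota b in
    ((p %| m - 2)%N && (p %| n - 2)%N ->
          osc_irr A B n m u v
            (mkConic (A * u ^+ (n - 2)) (B * v ^+ (m - 2)) (-1) 0 0 0)) /\
        ((p %| m + 1)%N && (p %| n + 1)%N ->
          osc_irr A B n m u v
            (mkConic 0 0 0 (-1) (B * v ^+ (m + 1)) (A * u ^+ (n + 1)))) /\
        ((p %| 2 * m - 1)%N && (p %| 2 * n - 1)%N ->
          osc_irr A B n m u v
            (mkConic (A ^+ 4 * u ^+ (4 * n - 2)) (B ^+ 4 * v ^+ (4 * m - 2)) 1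
                     (- (2%:R * A ^+ 2 * B ^+ 2 * u ^+ (2 * n - 1) * v ^+ (2 * m - 1)))
                     (- (2%:R * A ^+ 2 * u ^+ (2 * n - 1)))
                     (- (2%:R * B ^+ 2 * v ^+ (2 * m - 1))))) /\
        ((p %| 2 * m - 1)%N && (p %| n - 1)%N ->
          osc_irr A B n m u v
            (mkConic (- (A ^+ 2 * u ^+ (2 * n - 2))) 0 (-1) 0
                     (2%:R * A * u ^+ (n - 1)) (B ^+ 2 * v ^+ (2 * m - 1)))) /\
        ((p %| m + 1)%N && (p %| n - 1)%N ->
          osc_irr A B n m u v
            (mkConic 0 0 (B * v ^+ (m + 1)) (A * u ^+ (n - 1)) 0 (-1))) /\
        ((p %| m - 2)%N && (p %| n - 1)%N ->
          osc_irr A B n m u v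
            (mkConic 0 (B * v ^+ (m - 2)) (-1) 0 (A * u ^+ (n - 1)) 0)) /\
        ((p %| m - 1)%N && (p %| n - 2)%N ->
          osc_irr A B n m u v
            (mkConic (A * u ^+ (n - 2)) 0 (-1) 0 0 (B * v ^+ (m - 1)))) /\
        ((p %| m - 1)%N && (p %| 2 * n - 1)%N ->
          osc_irr A B n m u v
            (mkConic 0 (- (B ^+ 2 * v ^+ (2 * m - 2))) (-1) 0
                     (A ^+ 2 * u ^+ (2 * n - 1)) (2%:R * B * v ^+ (m - 1)))) /\
        ((p %| m - 1)%N && (p %| n + 1)%N ->
          osc_irr A B n m u v
            (mkConic 0 0 (A * u ^+ (n + 1)) (B * v ^+ (m - 1)) (-1) 0)).
Proof.
move=> pp p5 pF ha hb m2 mn pmn _ _ L iota u v hc hu hv A B.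
have pL : p \in [pchar L] := rmorph_pchar iota pF.
have hA : A != 0 by rewrite fmorph_eq0.
have hB : B != 0 by rewrite fmorph_eq0.
have two : (2%:R : L) != 0.
  rewrite -(dvdn_pcharf pL); apply/negP => /(dvdn_leq (isT : (0 < 2)%N)).
  by rewrite leqNgt (leq_trans _ p5).
have hnR : (n%:R : L) != 0.
  by rewrite -(dvdn_pcharf pL); apply: contra pmn => h; rewrite dvdn_mull.
have hmR : (m%:R : L) != 0.
  by rewrite -(dvdn_pcharf pL); apply: contra pmn => h; rewrite dvdn_mulr.
have cast k : (p %| k)%N -> (k%:R : L) = 0.
  by move=> h; apply/eqP; rewrite -(dvdn_pcharf pL).
have [n2 [en n2p]] := exn (leq_trans m2 mn).
have [m2' [em _]] := exn m2.
subst n m.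
have hal : A * u ^+ n2.+2 != 0 by rewrite mulf_neq0 // expf_neq0.
have hbe : B * v ^+ m2'.+2 != 0 by rewrite mulf_neq0 // expf_neq0.
have hc' : A * u ^+ n2.+2 + B * v ^+ m2'.+2 = 1 by [].
have eS : forall x y : L, x = n2%:R -> y = m2'%:R ->
   ((n2.+2)%:R - 1) * (m2'.+2)%:R * (B * v ^+ m2'.+2)
    + ((m2'.+2)%:R - 1) * (n2.+2)%:R * (A * u ^+ n2.+2) =
   Sx (A * u ^+ n2.+2) (B * v ^+ m2'.+2) x y.
  by move=> x y -> ->; rewrite /Sx; ring.
have go : forall H : conic L,
  ((n2.+2)%:R - 1) * (m2'.+2)%:R * (B * v ^+ m2'.+2)
    + ((m2'.+2)%:R - 1) * (n2.+2)%:R * (A * u ^+ n2.+2) != 0 ->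
  conic_nonzero H -> mdet H != 0 ->
  (forall Y, Y.[0] = v -> 'X^5 %| Fy A B u n2.+2 m2'.+2 Y ->
      'X^5 %| conic_evalp H (xx u) Y 1) ->
  osc_irr A B n2.+2 m2'.+2 u v H.
  move=> H hS Hnz hdet hcon; split; last exact: irr_det.
  exact: osc_generic.
have [e1 [e3 [e5 [e7 [e9 e11]]]]] := natE n2.
have [e2 [e4 [e6 [e8 [e10 e12]]]]] := natE m2'.
rewrite e7 e8 e9 e10 e5 e6 e1 e2 e3 e4 e11 e12.
have four : (4%:R : L) != 0.
  have -> : (4%:R : L) = 2%:R * 2%:R by ring.
  by rewrite mulf_neq0.
split; [|split; [|split; [|split; [|split; [|split; [|split; [|split]]]]]]].
- move=> /andP [hm hn]; apply: go.
  + rewrite (eS 0 0) ?cast //; exact: S1.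
  + by move=> /= [_ [_ [/eqP]]]; rewrite ?oppr_eq0 oner_eq0.
  + have -> : mdet (mkConic (A * u ^+ n2) (B * v ^+ m2') (-1) 0 0 0)
       = - (4%:R * (A * u ^+ n2) * (B * v ^+ m2')) by rewrite /mdet /=; ring.
    by rewrite oppr_eq0 !mulf_neq0 ?expf_neq0.
  + by move=> Y Y0 hF; apply: (contact1 pp pL p5 Y0 hF).
- move=> /andP [hm hn]; apply: go.
  + rewrite (eS (0 - 3) (0 - 3)); first exact: S2.
      by rewrite -(cast _ hn); ring.
    by rewrite -(cast _ hm); ring.
  + by move=> /= [_ [_ [_ [/eqP]]]]; rewrite ?oppr_eq0 oner_eq0.
  + have -> : mdet (mkConic 0 0 0 (-1) (B * v ^+ m2'.+3) (A * u ^+ n2.+3))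
       = - (B * v ^+ m2'.+3 * (A * u ^+ n2.+3)) by rewrite /mdet /=; ring.
    rewrite oppr_eq0; exact: (mulf_neq0 (mulf_neq0 hB (expf_neq0 _ hv)) (mulf_neq0 hA (expf_neq0 _ hu))).
  + by move=> Y Y0 hF; apply: (contact2 pp pL p5 Y0 hF).
- move=> /andP [hm hn]; apply: go.
  + rewrite (eS ((0 - 3) / 2) ((0 - 3) / 2)); first exact: S3.
      by rewrite -(cast _ hn); field; rewrite ?two.
    by rewrite -(cast _ hm); field; rewrite ?two.
  + by move=> /= [_ [_ [/eqP]]]; rewrite ?oppr_eq0 oner_eq0.
  + have eu : u ^+ (4 * n2 + 6) = (u ^+ (2 * n2 + 3)) ^+ 2.
      by rewrite -exprM e46.
    have ev : v ^+ (4 * m2' + 6) = (v ^+ (2 * m2' + 3)) ^+ 2.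
      by rewrite -exprM e46.
    rewrite /mdet /= eu ev.
    set P := A ^+ 2 * u ^+ (2 * n2 + 3); set Q := B ^+ 2 * v ^+ (2 * m2' + 3).
    have -> : A ^+ 4 * u ^+ (2 * n2 + 3) ^+ 2 = P ^+ 2 by rewrite /P; ring.
    have -> : B ^+ 4 * v ^+ (2 * m2' + 3) ^+ 2 = Q ^+ 2 by rewrite /Q; ring.
    have -> : 2 * A ^+ 2 * B ^+ 2 * u ^+ (2 * n2 + 3) * v ^+ (2 * m2' + 3) = 2 * P * Q.
      by rewrite /P /Q; ring.
    have -> : 2 * A ^+ 2 * u ^+ (2 * n2 + 3) = 2 * P by rewrite /P; ring.
    have -> : 2 * B ^+ 2 * v ^+ (2 * m2' + 3) = 2 * Q by rewrite /Q; ring.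
    have -> : 4%:R * P ^+ 2 * Q ^+ 2 * 1 - P ^+ 2 * (- (2 * Q)) ^+ 2 - 1 * (- (2 * P * Q)) ^+ 2 +
       - (2 * P * Q) * - (2 * P) * - (2 * Q) - Q ^+ 2 * (- (2 * P)) ^+ 2
       = - (4%:R * 4%:R * P ^+ 2 * Q ^+ 2) by ring.
    by rewrite oppr_eq0 !mulf_neq0 ?expf_neq0.
  + by move=> Y Y0 hF; apply: (contact3 pp pL p5 Y0 hF).
- move=> /andP [hm hn]; apply: go.
  + rewrite (eS (0 - 1) ((0 - 3) / 2)); first exact: S4.
      by rewrite -(cast _ hn); ring.
    by rewrite -(cast _ hm); field; rewrite ?two.
  + by move=> /= [_ [_ [/eqP]]]; rewrite ?oppr_eq0 oner_eq0.
  + have -> : mdet (mkConic (- (A ^+ 2 * u ^+ (2 * n2 + 2))) 0 (-1) 0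
                     (2 * A * u ^+ n2.+1) (B ^+ 2 * v ^+ (2 * m2' + 3)))
       = A ^+ 2 * u ^+ (2 * n2 + 2) * (B ^+ 2 * v ^+ (2 * m2' + 3)) ^+ 2 by rewrite /mdet /=; ring.
    by rewrite !mulf_neq0 ?expf_neq0 ?mulf_neq0 ?expf_neq0.
  + by move=> Y Y0 hF; apply: (contact4 pp pL p5 Y0 hF).
- move=> /andP [hm hn]; apply: go.
  + rewrite (eS (0 - 1) (0 - 3)); first exact: S5.
      by rewrite -(cast _ hn); ring.
    by rewrite -(cast _ hm); ring.
  + by move=> /= [_ [_ [_ [_ [_ /eqP]]]]]; rewrite ?oppr_eq0 oner_eq0.
  + have -> : mdet (mkConic 0 0 (B * v ^+ m2'.+3) (A * u ^+ n2.+1) 0 (-1))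
       = - (B * v ^+ m2'.+3 * (A * u ^+ n2.+1) ^+ 2) by rewrite /mdet /=; ring.
    rewrite oppr_eq0; exact: (mulf_neq0 (mulf_neq0 hB (expf_neq0 _ hv)) (expf_neq0 _ (mulf_neq0 hA (expf_neq0 _ hu)))).
  + by move=> Y Y0 hF; apply: (contact5 pp pL p5 Y0 hF).
- move=> /andP [hm hn]; apply: go.
  + rewrite (eS (0 - 1) 0); first exact: S6.
      by rewrite -(cast _ hn); ring.
    by rewrite cast.
  + by move=> /= [_ [_ [/eqP]]]; rewrite ?oppr_eq0 oner_eq0.
  + have -> : mdet (mkConic 0 (B * v ^+ m2') (-1) 0 (A * u ^+ n2.+1) 0)
       = - (B * v ^+ m2' * (A * u ^+ n2.+1) ^+ 2) by rewrite /mdet /=; ring.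
    rewrite oppr_eq0; exact: (mulf_neq0 (mulf_neq0 hB (expf_neq0 _ hv)) (expf_neq0 _ (mulf_neq0 hA (expf_neq0 _ hu)))).
  + by move=> Y Y0 hF; apply: (contact6 pp pL p5 Y0 hF).
- move=> /andP [hm hn]; apply: go.
  + rewrite (eS 0 (0 - 1)); first exact: S7.
      by rewrite cast.
    by rewrite -(cast _ hm); ring.
  + by move=> /= [_ [_ [/eqP]]]; rewrite ?oppr_eq0 oner_eq0.
  + have -> : mdet (mkConic (A * u ^+ n2) 0 (-1) 0 0 (B * v ^+ m2'.+1))
       = - (A * u ^+ n2 * (B * v ^+ m2'.+1) ^+ 2) by rewrite /mdet /=; ring.
    rewrite oppr_eq0; exact: (mulf_neq0 (mulf_neq0 hA (expf_neq0 _ hu)) (expf_neq0 _ (mulf_neq0 hB (expf_neq0 _ hv)))).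
  + by move=> Y Y0 hF; apply: (contact7 pp pL p5 Y0 hF).
- move=> /andP [hm hn]; apply: go.
  + rewrite (eS ((0 - 3) / 2) (0 - 1)); first exact: S8.
      by rewrite -(cast _ hn); field; rewrite ?two.
    by rewrite -(cast _ hm); ring.
  + by move=> /= [_ [_ [/eqP]]]; rewrite ?oppr_eq0 oner_eq0.
  + have -> : mdet (mkConic 0 (- (B ^+ 2 * v ^+ (2 * m2' + 2))) (-1) 0
                     (A ^+ 2 * u ^+ (2 * n2 + 3)) (2 * B * v ^+ m2'.+1))
       = B ^+ 2 * v ^+ (2 * m2' + 2) * (A ^+ 2 * u ^+ (2 * n2 + 3)) ^+ 2 by rewrite /mdet /=; ring.
    by rewrite !mulf_neq0 ?expf_neq0 ?mulf_neq0 ?expf_neq0.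
  + by move=> Y Y0 hF; apply: (contact8 pp pL p5 Y0 hF).
- move=> /andP [hm hn]; apply: go.
  + rewrite (eS (0 - 3) (0 - 1)); first exact: S9.
      by rewrite -(cast _ hn); ring.
    by rewrite -(cast _ hm); ring.
  + by move=> /= [_ [_ [_ [_ [/eqP]]]]]; rewrite ?oppr_eq0 oner_eq0.
  + have -> : mdet (mkConic 0 0 (A * u ^+ n2.+3) (B * v ^+ m2'.+1) (-1) 0)
       = - (A * u ^+ n2.+3 * (B * v ^+ m2'.+1) ^+ 2) by rewrite /mdet /=; ring.
    rewrite oppr_eq0; exact: (mulf_neq0 (mulf_neq0 hA (expf_neq0 _ hu)) (expf_neq0 _ (mulf_neq0 hB (expf_neq0 _ hv)))).
  + by move=> Y Y0 hF; apply: (contact9 pp pL p5 Y0 hF).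
Qed.
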